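(* Let $\alpha,\beta\in\mathbb{R}^n_{>}$. Then $\alpha$-GSP is Vickrey-preserving on $\Theta^\beta$ if and only if, for every $\theta\in\Theta^\beta$ (with the agents indexed so that $v_1(\theta_1)\ge v_2(\theta_2)\ge\dots\ge v_n(\theta_n)$ and with $v_{n+1}(\theta_{n+1}):=0$), the sequence $\{p_j(\theta)/\alpha_j\}_{j=1,\dots,k}$ is decreasing, where $$p_j(\theta)=\sum_{i=j}^{k} v_{i+1}(\theta_{i+1})\cdot(\beta_i-\beta_{i+1}).$$
   Context: Sponsored search setting: a set $N=\{1,\dots,n\}$ of agents and $k\le n$ slots $1,\dots,k$. An outcome assigns the agents to distinct positions in $\{1,\dots,n\}$; an agent in position $j\le k$ receives slot $j$, an agent in a position $>k$ receives nothing (value $0$). Utilities are quasilinear (value minus payment). $\mathbb{R}^n_{>}$ denotes the set of vectors $\alpha$ with $1=\alpha_1>\alpha_2>\dots>\alpha_k>0$ and $\alpha_j=0$ for $j>k$ (also set $\alpha_{n+1}=0$). For $\beta\in\mathbb{R}^n_{>}$, $\Theta^\beta$ is the set of type profiles $\theta$ such that each agent $i$ has a per-click value $v_i(\theta_i)\ge 0$ and values slot $j$ at $\beta_j\cdot v_i(\theta_i)$. The (fully expressive) VCG mechanism: each agent reports a bid $x_{i,j}$ for each slot $j$; it chooses an assignment maximizing the sum of the bids of agents on their assigned slots and charges each agent $i$ the Clarke payment (maximum total bid of the others over all assignments minus the others' total bid in the chosen assignment). The VCG outcome for $\theta$ is the assignment and payments of VCG when every agent bids its true value for every slot. $\alpha$-GSP: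 each agent $i$ submits a single number $b_i\ge 0$ (equivalently, the bid vector $(\alpha_1 b_i,\dots,\alpha_k b_i)$ in the GSP mechanism); agents are ranked by $b_i$ (ties broken arbitrarily); the agent of rank $j\le k$ receives slot $j$ and pays $\alpha_j$ times the $(j+1)$-st highest value of $b$ (zero if there is none). This is the GSP mechanism (slots sold in order $1,\dots,k$, each to the highest remaining bidder on that slot at the second-highest remaining bid on that slot) restricted to such bid vectors. Complete information: for a given type profile, a message profile is a Nash equilibrium if no agent can strictly increase its utility by unilaterally changing its message within its allowed message set. A mechanism is Vickrey-preserving on a set $T$ of type profiles if for every $\theta\in T$ it has a Nash equilibrium (for $\theta$) yielding the VCG outcome for $\theta$ (same assignment and payments). *)

(* Defs.v *)
From HB Require Import structures.
From mathcomp Require Import all_boot all_order all_algebra perm.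
From mathcomp Require Import reals.
Set Implicit Arguments. Unset Strict Implicit. Unset Printing Implicit Defensive.
Import Order.TTheory GRing.Theory Num.Theory.
Local Open Scope ring_scope.

(* Conventions: agents are 'I_n, positions/slots are 0-based.
   Position p (0-based) corresponds to position p+1 in the paper;
   positions p < k are the slots, positions p >= k receive nothing.
   Weight vectors alpha, beta are nat-indexed (0-based): a j = alpha_{j+1}. *)

Section Defs.
Variable R : realType.

Definition Rn_gt (n k : nat) (a : nat -> R) : Prop :=
  [/\ (0 < k)%N, (k <= n)%N & a 0%N = 1] /\
  [/\ (forall j : nat, (j.+1 < k)%N -> a j.+1 < a j),
      0 < a k.-1
    & (forall j : nat, (k <= j)%N -> a j = 0)].

(* t-th highest (0-based) entry of x : 'I_n -> R; 0 if t >= n. *)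
Definition nth_highest (n : nat) (x : 'I_n -> R) (t : nat) : R :=
  nth 0 (sort (fun u w : R => w <= u) [seq x i | i <- enum 'I_n]) t.

(* Outcome: slot allocation (None = no slot) and payments. *)
Definition outcome (n k : nat) : Type :=
  ({ffun 'I_n -> option 'I_k} * {ffun 'I_n -> R})%type.

Definition slot_of (k : nat) (p : nat) : option 'I_k := insub p.

Definition utility (n k : nat) (beta : nat -> R) (v : 'I_n -> R)
    (o : outcome n k) (i : 'I_n) : R :=
  (if o.1 i is Some j then beta (val j) * v i else 0) - o.2 i.

(* an assignment is a bijection agents -> positions {0..n-1} *)
Definition welfare (n : nat) (beta : nat -> R) (v : 'I_n -> R)
    (s : {perm 'I_n}) : R :=
  \sum_(l : 'I_n) beta (val (s l)) * v l.

Definition welfare_others (n : nat) (beta : nat -> R) (v : 'I_n -> R)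
    (s : {perm 'I_n}) (i : 'I_n) : R :=
  \sum_(l : 'I_n | l != i) beta (val (s l)) * v l.

Definition clarke (n : nat) (beta : nat -> R) (v : 'I_n -> R)
    (s : {perm 'I_n}) (i : 'I_n) : R :=
  \big[Num.max/welfare_others beta v 1%g i]_(t : {perm 'I_n})
      welfare_others beta v t i
  - welfare_others beta v s i.

Definition vcg_outcome (n k : nat) (beta : nat -> R) (v : 'I_n -> R)
    (o : outcome n k) : Prop :=
  exists s : {perm 'I_n},
    (forall t : {perm 'I_n}, welfare beta v t <= welfare beta v s) /\
    o = ([ffun i => slot_of k (val (s i))], [ffun i => clarke beta v s i]).

Definition consistent_ranking (n : nat) (b : 'I_n -> R) (r : {perm 'I_n}) :=
  forall i l : 'I_n, (val (r i) < val (r l))%N -> b l <= b i.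

Definition gsp_outcome (n k : nat) (a : nat -> R) (b : 'I_n -> R)
    (o : outcome n k) : Prop :=
  exists r : {perm 'I_n}, consistent_ranking b r /\
    o = ([ffun i => slot_of k (val (r i))],
         [ffun i => if (val (r i) < k)%N
                    then a (val (r i)) * nth_highest b (val (r i)).+1
                    else 0]).

Definition update_bid (n : nat) (b : 'I_n -> R) (i : 'I_n) (x : R) : 'I_n -> R :=
  fun l => if l == i then x else b l.

(* b (with the realized outcome o) is a Nash equilibrium of alpha-GSP for
   the type profile v: o is a GSP outcome of b, and no unilateral deviation
   to an allowed message x >= 0 (under any tie-breaking) strictly increases
   the deviator's utility. *)
Definition gsp_nash (n k : nat) (a beta : nat -> R) (v : 'I_n -> R)
    (b : 'I_n -> R) (o : outcome n k) : Prop :=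
  (forall i, 0 <= b i) /\ gsp_outcome a b o /\
  forall (i : 'I_n) (x : R), 0 <= x ->
    forall o' : outcome n k, gsp_outcome a (update_bid b i x) o' ->
      utility beta v o' i <= utility beta v o i.

Definition gsp_vickrey_preserving (n k : nat) (a beta : nat -> R) : Prop :=
  forall v : 'I_n -> R, (forall i, 0 <= v i) ->
    exists (b : 'I_n -> R) (o : outcome n k),
      vcg_outcome beta v o /\ gsp_nash a beta v b o.

(* p_j(theta) (0-based j) = sum_{i=j}^{k-1} v_(i+1) (beta_i - beta_{i+1}),
   where v_(t) is the t-th highest value (0-based), 0 for t >= n. *)
Definition vcg_price (n k : nat) (beta : nat -> R) (v : 'I_n -> R) (j : nat) : R :=
  \sum_(j <= i < k) nth_highest v i.+1 * (beta i - beta i.+1).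

End Defs.

(* Main.v *)
Require Import Defs.
From HB Require Import structures.
From mathcomp Require Import all_boot all_order all_algebra perm.
From mathcomp Require Import reals.
From mathcomp Require Import zify ring lra.
Import Order.TTheory GRing.Theory Num.Theory.
Local Open Scope ring_scope.
Set Implicit Arguments. Unset Strict Implicit. Unset Printing Implicit Defensive.

Definition geR (R : realType) : rel R := fun u w => w <= u.

Lemma geR_tot (R : realType) : total (@geR R).
Proof. by move=> x y; rewrite /geR le_total. Qed.
Lemma geR_tr (R : realType) : transitive (@geR R).
Proof. by move=> x y z; rewrite /geR => h1 h2; apply: le_trans h2 h1. Qed.
Lemma geR_anti (R : realType) : antisymmetric (@geR R).
Proof. by move=> x y; rewrite /geR => /andP[h1 h2]; apply/le_anti; rewrite h1 h2. Qed.

Lemma nhE (R : realType) n (x : 'I_n -> R) t :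
  nth_highest x t = nth 0 (sort (@geR R) (map x (enum 'I_n))) t.
Proof. by []. Qed.

Lemma size_srt (R : realType) n (x : 'I_n -> R) :
  size (sort (@geR R) (map x (enum 'I_n))) = n.
Proof. by rewrite size_sort size_map size_enum_ord. Qed.

Lemma nth_map_enum (R : realType) n (F : 'I_n -> R) a (Ha : (a < n)%N) :
  nth 0 (map F (enum 'I_n)) a = F (Ordinal Ha).
Proof.
rewrite (nth_map (Ordinal Ha)) ?size_enum_ord //; congr F; apply: val_inj.
by rewrite /= nth_enum_ord.
Qed.

Lemma perm_enum_perm n (s : {perm 'I_n}) :
  perm_eq (map s (enum 'I_n)) (enum 'I_n).
Proof.
apply: uniq_perm; first by rewrite map_inj_uniq ?enum_uniq //; apply: perm_inj.
  by rewrite enum_uniq.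
move=> x; rewrite mem_enum; apply/mapP; exists (s^-1 x)%g; rewrite ?mem_enum //.
by rewrite permKV.
Qed.

Lemma perm_pos (R : realType) n (v : 'I_n -> R) (t : {perm 'I_n}) :
  perm_eq (map v (enum 'I_n)) (map (fun m => v (t^-1 m)%g) (enum 'I_n)).
Proof.
have -> : map (fun m => v (t^-1 m)%g) (enum 'I_n) = map v (map (t^-1)%g (enum 'I_n)).
  by elim: (enum _) => //= a l ->.
by apply: perm_map; rewrite perm_sym perm_enum_perm.
Qed.

Lemma nh_ge0 (R : realType) n (x : 'I_n -> R) t :
  (forall i, 0 <= x i) -> 0 <= nth_highest x t.
Proof.
move=> hx; rewrite nhE.
case: (ltnP t n) => ht; last by rewrite nth_default ?size_srt.
have : nth 0 (sort (@geR R) (map x (enum 'I_n))) t \in map x (enum 'I_n).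
  by rewrite -(mem_sort (@geR R)) mem_nth ?size_srt.
by case/mapP=> y _ ->.
Qed.

Lemma nh_anti (R : realType) n (x : 'I_n -> R) a b :
  (forall i, 0 <= x i) -> (a <= b)%N -> nth_highest x b <= nth_highest x a.
Proof.
move=> hx hab.
case: (ltnP b n) => hb; last by rewrite [nth_highest x b]nhE nth_default ?size_srt ?nh_ge0.
rewrite leq_eqVlt in hab; case/orP: hab => [/eqP -> //|hab].
have := sort_sorted (@geR_tot R) (map x (enum 'I_n)).
rewrite sorted_pairwise; last exact: geR_tr.
move/(pairwiseP 0) => H; rewrite !nhE; apply: H; rewrite ?inE ?size_srt //.
exact: ltn_trans hab hb.
Qed.

Lemma nh_out (R : realType) n (x : 'I_n -> R) t : (n <= t)%N -> nth_highest x t = 0.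
Proof. by move=> h; rewrite nhE nth_default ?size_srt. Qed.

Lemma nh_rank (R : realType) n (x : 'I_n -> R) (r : {perm 'I_n}) :
  consistent_ranking x r -> forall m : 'I_n, nth_highest x m = x (r^-1 m)%g.
Proof.
move=> hc m; rewrite nhE.
have -> : sort (@geR R) (map x (enum 'I_n)) = map (fun m => x (r^-1 m)%g) (enum 'I_n).
  rewrite (perm_sortP (@geR_tot R) (@geR_tr R) (@geR_anti R) _ _ (perm_pos x r)).
  apply: sorted_sort; first exact: geR_tr.
  rewrite sorted_pairwise; last exact: geR_tr.
  apply/(pairwiseP 0) => a b; rewrite !inE size_map size_enum_ord => ha hb hab.
  rewrite !nth_map_enum /geR; apply: hc; rewrite !permKV /=; exact: hab.
by rewrite (nth_map_enum _ (ltn_ord m)); congr (x (r^-1 _)%g); apply: val_inj.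
Qed.

Lemma Rn_step (R : realType) n k (a : nat -> R) : Rn_gt n k a -> forall m, a m.+1 <= a m.
Proof.
case=> [[hk hkn a0] [hs hp hz]] m.
case: (ltnP m.+1 k) => h; first exact: ltW (hs _ h).
rewrite hz //; case: (ltnP m k) => h2; last by rewrite hz.
have -> : m = k.-1 by lia.
exact: ltW.
Qed.

Lemma Rn_le (R : realType) n k (a : nat -> R) : Rn_gt n k a ->
  forall x y, (x <= y)%N -> a y <= a x.
Proof.
move=> ha x y; elim: y => [|y IH]; first by rewrite leqn0 => /eqP ->.
rewrite leq_eqVlt => /orP[/eqP -> //|h].
exact: le_trans (Rn_step ha y) (IH h).
Qed.

Lemma Rn_pos (R : realType) n k (a : nat -> R) : Rn_gt n k a ->
  forall m, (m < k)%N -> 0 < a m.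
Proof.
move=> ha m hm; have [_ [_ hp _]] := ha.
apply: lt_le_trans hp (Rn_le ha _); lia.
Qed.

Lemma Rn_ge0 (R : realType) n k (a : nat -> R) : Rn_gt n k a -> forall m, 0 <= a m.
Proof.
move=> ha m; case: (ltnP m k) => h; first exact: ltW (Rn_pos ha h).
by have [_ [_ _ ->]] := ha.
Qed.

Lemma Rn_lt (R : realType) n k (a : nat -> R) : Rn_gt n k a ->
  forall x y, (x < y)%N -> (x < k)%N -> a y < a x.
Proof.
move=> ha x y hxy hx; have [_ [hs _ hz]] := ha.
case: (ltnP y k) => hy.
  apply: le_lt_trans (Rn_le ha hxy) (hs _ _); lia.
by rewrite hz // (Rn_pos ha).
Qed.

Lemma Rn_kn (R : realType) n k (a : nat -> R) : Rn_gt n k a -> (0 < k)%N /\ (k <= n)%N.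
Proof. by case=> [[]]. Qed.

Lemma Rn_z (R : realType) n k (a : nat -> R) : Rn_gt n k a -> forall j, (k <= j)%N -> a j = 0.
Proof. by case=> _ []. Qed.

Lemma sort_prefix (R : realType) (l : seq R) k :
  (forall a b, (a < b)%N -> (b < size l)%N -> (a < k)%N -> nth 0 l b <= nth 0 l a) ->
  sort (@geR R) l = take k l ++ sort (@geR R) (drop k l).
Proof.
move=> hd.
have hp : perm_eq l (take k l ++ sort (@geR R) (drop k l)).
  rewrite -{1}(cat_take_drop k l) perm_cat2l perm_sym; exact: permEl (perm_sort _ _).
rewrite (perm_sortP (@geR_tot R) (@geR_tr R) (@geR_anti R) _ _ hp).
apply: sorted_sort; first exact: geR_tr.
rewrite sorted_pairwise; last exact: geR_tr.
rewrite pairwise_cat; apply/and3P; split.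
- apply/allrelP => x y hx; rewrite mem_sort => hy.
  case/(nthP 0): hx => a ha <-; case/(nthP 0): hy => b hb <-.
  move: ha hb; rewrite size_drop => ha hb.
  have hak : (a < k)%N by move: ha; rewrite size_take; case: (ltnP k (size l)) => hh // h; exact: leq_trans h hh.
  rewrite nth_take // nth_drop /geR; apply: hd => //; [exact: leq_trans hak (leq_addr _ _) | by rewrite -ltn_subRL].
- apply/(pairwiseP 0) => a b; rewrite !inE => ha hb hab.
  have hak : (b < k)%N by move: hb; rewrite size_take; case: (ltnP k (size l)) => hh // h; exact: leq_trans h hh.
  have hbl : (b < size l)%N.
    apply: leq_trans hb _; rewrite size_take; case: ifP => [/ltnW|] //.
  have hak' : (a < k)%N by exact: ltn_trans hab hak.
  by rewrite !nth_take /geR //; apply: hd.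
- rewrite -sorted_pairwise; [exact: sort_sorted (@geR_tot R) _ | exact: geR_tr].
Qed.

Definition posl (R : realType) n (v : 'I_n -> R) (t : {perm 'I_n}) :=
  map (fun m => v (t^-1 m)%g) (enum 'I_n).

Definition dominant (R : realType) n k (v : 'I_n -> R) (t : {perm 'I_n}) :=
  forall a b : 'I_n, (a < b)%N -> (a < k)%N -> v (t^-1 b)%g <= v (t^-1 a)%g.

Lemma dom_sort (R : realType) n k (v : 'I_n -> R) (t : {perm 'I_n}) :
  dominant k v t ->
  sort (@geR R) (map v (enum 'I_n)) =
    take k (posl v t) ++ sort (@geR R) (drop k (posl v t)).
Proof.
move=> hd.
rewrite (perm_sortP (@geR_tot R) (@geR_tr R) (@geR_anti R) _ _ (perm_pos v t)).
apply: sort_prefix => a b hab; rewrite size_map size_enum_ord => hb ha.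
rewrite !nth_map_enum; first exact: ltn_trans hab hb.
move=> hb'; apply: hd => //.
Qed.

Lemma dom_nth (R : realType) n k (v : 'I_n -> R) (t : {perm 'I_n}) :
  dominant k v t -> forall m : 'I_n, (m < k)%N -> nth_highest v m = v (t^-1 m)%g.
Proof.
move=> hd m hm; rewrite nhE (dom_sort hd) nth_cat size_take size_map size_enum_ord.
have -> : (m < (if (k < n)%N then k else n))%N by have := ltn_ord m; case: (ltnP k n) => hh; lia.
rewrite nth_take // /posl (nth_map_enum _ (ltn_ord m)).
by congr (v (t^-1 _)%g); apply: val_inj.
Qed.

Lemma welfare_pos (R : realType) n (beta : nat -> R) (v : 'I_n -> R) (t : {perm 'I_n}) :
  welfare beta v t = \sum_(m : 'I_n) beta m * v (t^-1 m)%g.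
Proof.
rewrite /welfare (reindex_inj (@perm_inj _ (t^-1)%g)).
by apply: eq_bigr => m _; rewrite permKV.
Qed.

Lemma sum2 (R : realType) n (F : 'I_n -> R) a b : a != b ->
  \sum_m F m = F a + F b + \sum_(m | (m != a) && (m != b)) F m.
Proof.
move=> hab; rewrite (bigD1 a) //= (bigD1 b) /= ?addrA //.
by rewrite eq_sym.
Qed.

Definition optimal (R : realType) n (beta : nat -> R) (v : 'I_n -> R) (t : {perm 'I_n}) :=
  forall t' : {perm 'I_n}, welfare beta v t' <= welfare beta v t.

Lemma opt_dom (R : realType) n k (beta : nat -> R) (v : 'I_n -> R) (t : {perm 'I_n}) :
  Rn_gt n k beta -> optimal beta v t -> dominant k v t.
Proof.
move=> hb ho a b hab hak.
have hne : a != b by rewrite neq_ltn hab.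
have := ho (t * tperm a b)%g.
rewrite !welfare_pos (sum2 _ hne) [X in _ <= X](sum2 _ hne).
have hinv : forall m, ((t * tperm a b)^-1)%g m = (t^-1)%g (tperm a b m).
  by move=> m; rewrite invgM permM tpermV.
have -> : \sum_(m | (m != a) && (m != b)) beta m * v (((t * tperm a b)^-1)%g m)
   = \sum_(m | (m != a) && (m != b)) beta m * v ((t^-1)%g m).
  apply: eq_bigr => m /andP[h1 h2]; rewrite hinv tpermD //; by rewrite eq_sym.
rewrite !hinv tpermL tpermR.
have hlt := Rn_lt hb hab hak.
move=> h; nra.
Qed.

Definition Wk (R : realType) n k (beta : nat -> R) (v : 'I_n -> R) :=
  \sum_(0 <= m < k) beta m * nth_highest v m.

Lemma opt_W (R : realType) n k (beta : nat -> R) (v : 'I_n -> R) (t : {perm 'I_n}) :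
  Rn_gt n k beta -> optimal beta v t -> welfare beta v t = Wk k beta v.
Proof.
move=> hb ho; have hd := opt_dom hb ho; have [hk hkn] := Rn_kn hb.
rewrite welfare_pos.
have -> : \sum_(m : 'I_n) beta m * v (t^-1 m)%g = \sum_(m : 'I_n) beta m * nth_highest v m.
  apply: eq_bigr => m _; case: (ltnP m k) => hm; first by rewrite (dom_nth hd).
  by rewrite (Rn_z hb hm) !mul0r.
rewrite -(big_mkord xpredT (fun m => beta m * nth_highest v m)).
rewrite /Wk (@big_cat_nat _ _ _ k 0 n _ _ (leq0n k) hkn) /=.
rewrite [X in _ + X = _](_ : _ = 0) ?addr0 //.
rewrite big_nat_cond big1 // => m /andP[/andP[hm _] _].
by rewrite (Rn_z hb hm) mul0r.
Qed.

Lemma bigmax_att (R : realType) (I : finType) (F : I -> R) (i0 : I) :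
  exists j, \big[Num.max/F i0]_i F i = F j.
Proof.
apply: (big_ind (fun x => exists j, x = F j)); first by exists i0.
  move=> x y [j1 ->] [j2 ->]; case: (leP (F j1) (F j2)) => _; [by exists j2 | by exists j1].
by move=> i _; exists i.
Qed.

Lemma max_welfare (R : realType) n k (beta : nat -> R) (v : 'I_n -> R) :
  Rn_gt n k beta -> \big[Num.max/welfare beta v 1%g]_t welfare beta v t = Wk k beta v.
Proof.
move=> hb; have [t0 ht0] := bigmax_att (welfare beta v) 1%g.
rewrite ht0; apply: opt_W => // t'; rewrite -ht0.
exact: le_bigmax.
Qed.

Definition zat (R : realType) n (v : 'I_n -> R) (i : 'I_n) : 'I_n -> R :=
  fun l => if l == i then 0 else v l.

Lemma wo_zat (R : realType) n (beta : nat -> R) (v : 'I_n -> R) t i :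
  welfare_others beta v t i = welfare beta (zat v i) t.
Proof.
rewrite /welfare (bigD1 i) //= /zat eqxx mulr0 add0r.
by apply: eq_bigr => l /negbTE ->.
Qed.

Lemma clarkeE (R : realType) n k (beta : nat -> R) (v : 'I_n -> R) (s : {perm 'I_n}) i :
  Rn_gt n k beta -> optimal beta v s ->
  clarke beta v s i = Wk k beta (zat v i) - (Wk k beta v - beta (s i) * v i).
Proof.
move=> hb ho; rewrite /clarke.
have -> : \big[Num.max/welfare_others beta v 1%g i]_t welfare_others beta v t i
   = \big[Num.max/welfare beta (zat v i) 1%g]_t welfare beta (zat v i) t.
  by rewrite wo_zat; apply: eq_bigr => t _; rewrite wo_zat.
rewrite (max_welfare _ hb) wo_zat.
congr (_ - _); rewrite -(opt_W hb ho) /welfare [in RHS](bigD1 i) //= addrC addrK.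
rewrite (bigD1 i) //= /zat eqxx mulr0 add0r; by apply: eq_bigr => l /negbTE ->.
Qed.

Lemma price_alg (R : realType) (beta w : nat -> R) j k : (j < k)%N -> beta k = 0 ->
  \sum_(0 <= m < k) beta m * (if (m < j)%N then w m else w m.+1)
  - (\sum_(0 <= m < k) beta m * w m - beta j * w j)
  = \sum_(j <= i < k) w i.+1 * (beta i - beta i.+1).
Proof.
case: k => // k hjk hbk.
rewrite !(@big_cat_nat _ _ _ j 0 k.+1) //=.
have -> : \sum_(0 <= m < j) beta m * (if (m < j)%N then w m else w m.+1)
   = \sum_(0 <= m < j) beta m * w m.
  by apply: eq_big_nat => m /andP[_ ->].
have -> : \sum_(j <= m < k.+1) beta m * (if (m < j)%N then w m else w m.+1)
   = \sum_(j <= m < k.+1) beta m * w m.+1.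
  by apply: eq_big_nat => m /andP[hm _]; rewrite ltnNge hm.
rewrite [\sum_(j <= m < k.+1) beta m * w m]big_ltn // big_add1 /=.
have -> : \sum_(j <= i < k.+1) w i.+1 * (beta i - beta i.+1)
   = \sum_(j <= i < k.+1) beta i * w i.+1 - \sum_(j <= i < k.+1) beta i.+1 * w i.+1.
  by rewrite -sumrB; apply: eq_bigr => i _; rewrite mulrBr mulrC [w _ * _]mulrC.
rewrite [\sum_(j <= i < k.+1) beta i.+1 * w i.+1]big_nat_recr //= hbk mul0r addr0.
lra.
all: exact: ltnW.
Qed.

Lemma w_ge0 (R : realType) n (v : 'I_n -> R) x :
  (forall i, 0 <= v i) -> x \in sort (@geR R) (map v (enum 'I_n)) -> 0 <= x.
Proof. by move=> hv; rewrite mem_sort => /mapP[y _ ->]. Qed.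

Lemma drop_catl (T : Type) (s1 s2 : seq T) m : (m <= size s1)%N ->
  drop m (s1 ++ s2) = drop m s1 ++ s2.
Proof.
move=> h; rewrite drop_cat; case: ltnP => h2 //.
have -> : m = size s1 by apply/eqP; rewrite eqn_leq h h2.
by rewrite subnn drop0 drop_size.
Qed.

Lemma subseq_skip (T : eqType) (s : seq T) j : subseq (take j s ++ drop j.+1 s) s.
Proof.
rewrite -{3}(cat_take_drop j s); apply: cat_subseq => //.
rewrite -add1n -drop_drop; case: (drop j s) => //= x t; rewrite drop0; exact: subseq_cons.
Qed.

Lemma zat_sort (R : realType) n k (v : 'I_n -> R) (s : {perm 'I_n}) i :
  (forall l, 0 <= v l) -> (k <= n)%N -> dominant k v s -> (s i < k)%N ->
  sort (@geR R) (map (zat v i) (enum 'I_n)) =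
  take (s i) (sort (@geR R) (map v (enum 'I_n))) ++
  drop (s i).+1 (sort (@geR R) (map v (enum 'I_n))) ++ [:: 0].
Proof.
move=> hv hkn hd hj.
set w := sort (@geR R) (map v (enum 'I_n)).
set j := val (s i).
have hL : size (posl v s) = n by rewrite size_map size_enum_ord.
have hjn : (j < n)%N by exact: ltn_ord.
have hL' : posl (zat v i) s = set_nth 0 (posl v s) j 0.
  apply: (@eq_from_nth _ 0); first by rewrite size_set_nth hL size_map size_enum_ord; apply/esym/maxn_idPr.
  move=> m; rewrite size_map size_enum_ord => hm.
  rewrite nth_set_nth /= /posl !(nth_map_enum _ hm) /zat.
  have -> : ((s^-1)%g (Ordinal hm) == i) = (m == j).
    apply/eqP/eqP => [h|h]; first by rewrite /j -h permKV.
    by apply: (@perm_inj _ s); rewrite permKV; apply: val_inj; rewrite /= h.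
  by case: (m == j).
have hw : w = take k (posl v s) ++ sort (@geR R) (drop k (posl v s)) by rewrite /w (dom_sort hd).
have hTk : size (take k (posl v s)) = k by rewrite size_takel // hL.
have hp : perm_eq (map (zat v i) (enum 'I_n)) (take j w ++ drop j.+1 w ++ [:: 0]).
  apply: (perm_trans (perm_pos _ s)); rewrite -/(posl _ _) hL' set_nthE hL hjn.
  rewrite hw takel_cat ?hTk 1?ltnW // take_takel 1?ltnW // perm_cat2l.
  rewrite drop_catl ?hTk //.
  rewrite -{1}(cat_take_drop k (posl v s)) drop_catl ?hTk //.
  rewrite perm_sym perm_catC /= perm_cons perm_cat2l.
  exact: permEl (perm_sort _ _).
rewrite (perm_sortP (@geR_tot R) (@geR_tr R) (@geR_anti R) _ _ hp).
apply: sorted_sort; first exact: geR_tr.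
rewrite sorted_pairwise; last exact: geR_tr.
rewrite catA pairwise_cat; apply/and3P; split => //.
- apply/allrelP => x y hx; rewrite inE => /eqP ->; rewrite /geR.
  apply: (w_ge0 hv); move: hx; rewrite mem_cat => /orP[] h.
    exact: mem_take h.
  exact: mem_drop h.
- rewrite -sorted_pairwise; last exact: geR_tr.
  apply: (subseq_sorted (@geR_tr R) _ (sort_sorted (@geR_tot R) (map v (enum 'I_n)))).
  exact: subseq_skip.
Qed.

Lemma nh_zat (R : realType) n k (v : 'I_n -> R) (s : {perm 'I_n}) i m :
  (forall l, 0 <= v l) -> (k <= n)%N -> dominant k v s -> (s i < k)%N -> (m < n)%N ->
  nth_highest (zat v i) m = if (m < s i)%N then nth_highest v m else nth_highest v m.+1.
Proof.
move=> hv hkn hd hj hm.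
rewrite nhE (zat_sort hv hkn hd hj) !nhE nth_cat size_takel; last by rewrite size_srt; exact: ltnW (ltn_ord _).
case: ltnP => h1; first by rewrite nth_take.
rewrite nth_cat size_drop size_srt.
case: ltnP => h2; first by rewrite nth_drop; congr nth; lia.
have hm' : m = n.-1 by have := ltn_ord (s i); lia.
have -> : (m - s i - (n - (s i).+1))%N = 0%N by have := ltn_ord (s i); lia.
by rewrite /= nth_default // size_srt; lia.
Qed.

Lemma clarke_price (R : realType) n k (beta : nat -> R) (v : 'I_n -> R) (s : {perm 'I_n}) i :
  Rn_gt n k beta -> (forall l, 0 <= v l) -> optimal beta v s ->
  clarke beta v s i = vcg_price k beta v (s i).
Proof.
move=> hb hv ho; rewrite (clarkeE _ hb ho).
have hd := opt_dom hb ho; have [hk hkn] := Rn_kn hb.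
case: (ltnP (s i) k) => hj.
- have hvi : v i = nth_highest v (s i) by rewrite (dom_nth hd) // permK.
  rewrite hvi /vcg_price -(price_alg (fun m => nth_highest v m) hj (Rn_z hb (leqnn k))).
  congr (_ - _); apply: eq_big_nat => m /andP[_ hm].
  by rewrite (nh_zat hv hkn hd hj) //; exact: leq_trans hm hkn.
- rewrite (Rn_z hb hj) mul0r subr0 /vcg_price big_geq //.
  have hd' : dominant k (zat v i) s.
    move=> a b hab hak; rewrite /zat.
    have -> : ((s^-1)%g a == i) = false.
      apply/negbTE/eqP => h; move: hj; rewrite -h permKV; lia.
    case: ifP => _; [exact: hv | exact: hd].
  apply/eqP; rewrite subr_eq0; apply/eqP; rewrite /Wk.
  apply: eq_big_nat => m /andP[_ hm].
  have hmn : (m < n)%N by exact: leq_trans hm hkn.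
  have -> : m = val (Ordinal hmn) by [].
  rewrite (dom_nth hd') // (dom_nth hd) // /zat.
  case: ifP => // /eqP h; move: hj; rewrite -h permKV /=; lia.
Qed.

Lemma slot_eq n k (s r : {perm 'I_n}) i : (s i < k)%N ->
  slot_of k (val (s i)) = slot_of k (val (r i)) -> val (r i) = val (s i).
Proof.
rewrite /slot_of => hs.
rewrite (insubT (fun m => (m < k)%N) hs).
case: (ltnP (r i) k) => hr.
  by rewrite (insubT (fun m => (m < k)%N) hr) => -[].
by rewrite insubF // ltnNge hr.
Qed.

Lemma gsp_vcg_price (R : realType) n k (alpha beta : nat -> R) (v : 'I_n -> R)
    (b : 'I_n -> R) (o : outcome R n k) :
  Rn_gt n k beta -> (forall l, 0 <= v l) ->
  vcg_outcome beta v o -> gsp_outcome alpha b o ->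
  forall m : 'I_n, (m < k)%N -> vcg_price k beta v m = alpha m * nth_highest b m.+1.
Proof.
move=> hb hv [s [hopt ho]] [r [hcons ho']] m hm.
set i := (s^-1 m)%g.
have hsi : s i = m by rewrite permKV.
have := congr1 (fun o : outcome R n k => (o.1 i, o.2 i)) (etrans (esym ho) ho').
rewrite /= !ffunE; case=> e1 e2.
have hri : val (r i) = val (s i) by apply: slot_eq e1; rewrite hsi.
move: e2; rewrite hri hsi hm (clarke_price _ hb hv) ?hsi //.
Qed.

Lemma necessity (R : realType) n k (alpha beta : nat -> R) :
  Rn_gt n k alpha -> Rn_gt n k beta ->
  gsp_vickrey_preserving n k alpha beta ->
   forall v : 'I_n -> R, (forall i, 0 <= v i) ->
     forall j : nat, (j.+1 < k)%N ->
       vcg_price k beta v j.+1 / alpha j.+1 <= vcg_price k beta v j / alpha j.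
Proof.
move=> ha hb hvp v hv j hj.
have [hk hkn] := Rn_kn hb.
have [bb [o [hvcg [hb0 [hgsp _]]]]] := hvp v hv.
have hj1n : (j.+1 < n)%N by exact: leq_trans hj hkn.
have hjn : (j < n)%N by exact: ltnW.
have e1 := gsp_vcg_price hb hv hvcg hgsp (m := Ordinal hj1n) hj.
have e0 := gsp_vcg_price hb hv hvcg hgsp (m := Ordinal hjn) (ltnW hj).
rewrite /= in e0 e1; rewrite e0 e1.
have a0 : alpha j != 0 by rewrite gt_eqF // (Rn_pos ha (ltnW hj)).
have a1 : alpha j.+1 != 0 by rewrite gt_eqF // (Rn_pos ha hj).
rewrite [alpha j * _]mulrC [alpha j.+1 * _]mulrC !mulfK //.
exact: nh_anti.
Qed.

Lemma pigeon n (s r : {perm 'I_n}) (i : 'I_n) (j : nat) (Q : pred nat) (PL : seq nat) :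
  uniq PL -> size PL = j.+1 -> val (r i) = j ->
  (forall m, m \in PL -> [&& (m < n)%N, m != val (s i) & Q m]) ->
  exists a : 'I_n, [/\ a != i, Q (val (s a)) & (j < r a)%N].
Proof.
move=> hu hs hri hPL.
case: (boolP [exists a : 'I_n, [&& a != i, Q (val (s a)) & (j < r a)%N]]).
  by case/existsP => a /and3P[h1 h2 h3]; exists a.
rewrite negb_exists => /forallP hn.
pose f m := val (r ((s^-1)%g (insubd i m))).
have hval : forall m, m \in PL -> val (insubd i m) = m.
  by move=> m /hPL /and3P[hm _ _]; rewrite val_insubd hm.
have hsub : {subset map f PL <= iota 0 j}.
  move=> z /mapP[m hm ->]; rewrite mem_iota add0n /f.
  have := hn ((s^-1)%g (insubd i m)); rewrite permKV hval //.
  have /and3P[_ hmi hQ] := hPL m hm.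
  have hai : (s^-1)%g (insubd i m) != i.
    apply/eqP => h; have e : s i = insubd i m by rewrite -{1}h permKV.
    by move: hmi; rewrite e hval // eqxx.
  rewrite hai hQ /= -leqNgt leq_eqVlt => /orP[/eqP he|] //.
  move: hai; rewrite -hri in he; have := val_inj he => /perm_inj ->; rewrite eqxx.
  by [].
have hu' : uniq (map f PL).
  rewrite map_inj_in_uniq // => m1 m2 h1 h2 /val_inj /perm_inj /perm_inj he.
  by rewrite -(hval m1 h1) -(hval m2 h2) he.
have := uniq_leq_size hu' hsub; rewrite size_map size_iota hs; lia.
Qed.

Lemma cost_bound (R : realType) n (B : nat -> R) (s r : {perm 'I_n}) (i : 'I_n) (x y : R) (j : nat) :
  consistent_ranking (update_bid (fun l => B (s l)) i x) r -> val (r i) = j -> (j.+1 < n)%N ->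
  (forall m, (m <= j.+1)%N -> y <= B m) ->
  y <= nth_highest (update_bid (fun l => B (s l)) i x) j.+1.
Proof.
move=> hc hri hjn hB.
set b' := update_bid (fun l => B (s l)) i x.
suff [a [hai hya hra]] : exists a : 'I_n, [/\ a != i, y <= B (s a) & (j < r a)%N].
  have -> : j.+1 = val (Ordinal hjn) by [].
  rewrite (nh_rank hc); set g := (r^-1)%g (Ordinal hjn).
  have hba : b' a = B (s a) by rewrite /b' /update_bid (negbTE hai).
  apply: le_trans hya _; rewrite -hba.
  case: (ltnP j.+1 (r a)) => h.
    apply: hc; rewrite /g permKV /=; exact: h.
  have -> : a = g.
    apply: (@perm_inj _ r); rewrite /g permKV; apply: val_inj => /=; apply/eqP.
    by rewrite eqn_leq h hra.
  by [].
case: (ltnP j (s i)) => hj.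
- apply: (@pigeon n s r i j (fun m => y <= B m) (iota 0 j.+1)); rewrite ?iota_uniq ?size_iota //.
  move=> m; rewrite mem_iota add0n ltnS => hm.
  rewrite (hB m) ?andbT; last by apply: leq_trans hm (leqnSn _).
  apply/andP; split; first by apply: leq_trans hjn; rewrite ltnS; exact: ltnW.
  by rewrite neq_ltn (leq_ltn_trans hm hj).
- have hin : val (s i) \in iota 0 j.+2 by rewrite mem_iota add0n leq0n /= ltnS; apply: leq_trans hj (leqnSn _).
  apply: (@pigeon n s r i j (fun m => y <= B m) (rem (val (s i)) (iota 0 j.+2))).
  + by apply: rem_uniq; apply: iota_uniq.
  + by rewrite size_rem // size_iota.
  + by [].
  move=> m; rewrite mem_rem_uniq ?iota_uniq // inE mem_iota add0n => /andP[hm1 hm2].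
  rewrite hm1 (hB m) ?andbT; last by rewrite -ltnS.
  by move: hm2; rewrite ?leq0n /= => hm2; apply: leq_trans hm2 hjn.
Qed.

Lemma phi_repr (R : realType) n k (beta : nat -> R) (v : 'I_n -> R) (y : R) j :
  Rn_gt n k beta -> (j <= k)%N ->
  beta j * y - vcg_price k beta v j =
  \sum_(j <= m < k) (beta m - beta m.+1) * (y - nth_highest v m.+1).
Proof.
move=> hb hjk.
have hbj : beta j = \sum_(j <= m < k) (beta m - beta m.+1).
  have := telescope_sumr beta hjk; rewrite (Rn_z hb (leqnn k)) sub0r => h.
  by rewrite -[LHS]opprK -h -sumrN; apply: eq_bigr => m _; rewrite opprB.
rewrite {1}hbj mulr_suml /vcg_price -sumrB; apply: eq_bigr => m _.
by ring.
Qed.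

Lemma head_ge (R : realType) (t : seq R) y :
  sorted (@geR R) t -> y \in t -> y <= nth 0 t 0.
Proof.
move=> hs hy; move: hs; rewrite (sorted_pairwise (@geR_tr R)).
case: t hy => // x t; rewrite inE /= => /orP[/eqP -> //| hy] /andP[/allP h _].
exact: h.
Qed.

Lemma vi_le_wk (R : realType) n k (v : 'I_n -> R) (s : {perm 'I_n}) i :
  dominant k v s -> (k <= s i)%N -> v i <= nth_highest v k.
Proof.
move=> hd hki.
have hkn : (k < n)%N by exact: leq_ltn_trans hki (ltn_ord _).
have hL : size (posl v s) = n by rewrite size_map size_enum_ord.
rewrite nhE (dom_sort hd) nth_cat size_takel ?hL ?(ltnW hkn) // ltnn subnn.
apply: head_ge; first exact: sort_sorted (@geR_tot R) _.
rewrite mem_sort.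
have -> : v i = nth 0 (drop k (posl v s)) (s i - k).
  rewrite nth_drop subnKC // /posl (nth_map_enum _ (ltn_ord (s i))).
  by congr v; apply: (@perm_inj _ s); rewrite permKV; apply: val_inj.
by apply: mem_nth; rewrite size_drop hL; have := ltn_ord (s i); lia.
Qed.

Lemma ef (R : realType) n k (beta : nat -> R) (v : 'I_n -> R) (s : {perm 'I_n}) i j :
  Rn_gt n k beta -> (forall l, 0 <= v l) -> optimal beta v s -> (j <= k)%N ->
  beta j * v i - vcg_price k beta v j <=
  (if (s i < k)%N then beta (s i) * v i - vcg_price k beta v (s i) else 0).
Proof.
move=> hb hv ho hjk; have hd := opt_dom hb ho.
have hd0 : forall m, 0 <= beta m - beta m.+1 by move=> m; rewrite subr_ge0 (Rn_step hb).
rewrite (phi_repr _ _ hb hjk); case: ifP => hj.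
- rewrite (phi_repr _ _ hb (ltnW hj)).
  have hvi : v i = nth_highest v (s i) by rewrite (dom_nth hd) // permK.
  case: (leqP j (s i)) => hjj.
  + rewrite (@big_cat_nat _ _ _ (s i) j k _ _ hjj (ltnW hj)) /= gerDr.
    rewrite big_nat_cond; apply: sumr_le0 => m /andP[/andP[_ hm] _]; apply: mulr_ge0_le0 => //.
    by rewrite subr_le0 hvi; apply: nh_anti.
  + rewrite [X in _ <= X](@big_cat_nat _ _ _ j (s i) k _ _ (ltnW hjj) hjk) /= lerDr.
    rewrite big_nat_cond; apply: sumr_ge0 => m /andP[/andP[hm _] _]; apply: mulr_ge0 => //.
    by rewrite subr_ge0 hvi; apply: nh_anti => //; apply: leq_trans hm (leqnSn _).
- rewrite big_nat_cond; apply: sumr_le0 => m /andP[/andP[_ hm] _]; apply: mulr_ge0_le0 => //.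
  rewrite subr_le0; apply: le_trans (vi_le_wk hd _) _; first by rewrite leqNgt hj.
  exact: nh_anti.
Qed.

Lemma sufficiency (R : realType) n k (alpha beta : nat -> R) :
  Rn_gt n k alpha -> Rn_gt n k beta ->
  (forall v : 'I_n -> R, (forall i, 0 <= v i) ->
     forall j : nat, (j.+1 < k)%N ->
       vcg_price k beta v j.+1 / alpha j.+1 <= vcg_price k beta v j / alpha j) ->
  gsp_vickrey_preserving n k alpha beta.
Proof.
move=> ha hb hdec v hv.
have [hk hkn] := Rn_kn hb.
have [s hs] := bigmax_att (welfare beta v) 1%g.
have ho : optimal beta v s by move=> t; rewrite -hs; exact: le_bigmax.
set P := vcg_price k beta v.
set q := fun j => P j / alpha j.
set B := fun m => if (m <= k)%N then q m.-1 else 0.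
pose b := fun l => B (s l).
have hP0 : forall j, 0 <= P j.
  move=> j; apply: sumr_ge0 => m _; apply: mulr_ge0; first exact: nh_ge0.
  by rewrite subr_ge0 (Rn_step hb).
have hq0 : forall j, 0 <= q j by move=> j; apply: divr_ge0 (hP0 j) (Rn_ge0 ha j).
have hqa : forall c d, (c <= d)%N -> (d < k)%N -> q d <= q c.
  move=> c d; elim: d => [|d IH]; first by rewrite leqn0 => /eqP ->.
  rewrite leq_eqVlt => /orP[/eqP -> //|hcd] hd.
  exact: le_trans (hdec v hv d hd) (IH hcd (ltnW hd)).
have hB0 : forall m, 0 <= B m by move=> m; rewrite /B; case: ifP.
have hBa : forall x y, (x <= y)%N -> B y <= B x.
  move=> x y hxy; rewrite /B; case: ifP => hy; last exact: (hB0 x).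
  have -> : (x <= k)%N by exact: leq_trans hxy hy.
  apply: hqa; lia.
have hcons : consistent_ranking b s by move=> i l h; apply: hBa; exact: ltnW h.
have hnb : forall m : 'I_n, nth_highest b m = B m.
  by move=> m; rewrite (nh_rank hcons) /b permKV.
have hPz : forall j, (n <= j.+1)%N -> P j = 0.
  move=> j hj; rewrite /P /vcg_price big_nat_cond big1 // => m /andP[/andP[hm _] _].
  by rewrite nh_out ?mul0r //; apply: leq_trans hj _.
have hal : forall j, (j < k)%N -> alpha j != 0 by move=> j hj; rewrite gt_eqF // (Rn_pos ha hj).
have hpay : forall j, (j < k)%N -> alpha j * nth_highest b j.+1 = P j.
  move=> j hj; case: (ltnP j.+1 n) => hjn.
    have -> : j.+1 = val (Ordinal hjn) by [].
    by rewrite hnb /B /= hj /q mulrC divfK // hal.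
  by rewrite nh_out // mulr0 hPz.
exists b, ([ffun i => slot_of k (s i)], [ffun i => clarke beta v s i]).
split; first by exists s.
split; first by move=> i; exact: hB0.
split.
  exists s; split => //; congr pair; apply/ffunP => i; rewrite !ffunE (clarke_price _ hb hv ho).
  case: ifP => h; first by rewrite hpay.
  by rewrite /vcg_price big_geq // leqNgt h.
move=> i x hx o' [r [hc ->]].
rewrite /utility /= !ffunE (clarke_price _ hb hv ho).
have hU : (if slot_of k (s i) is Some j then beta (val j) * v i else 0) - P (s i)
   = (if (s i < k)%N then beta (s i) * v i - P (s i) else 0).
  rewrite /slot_of; case: ifP => h; first by rewrite (insubT (fun m => (m < k)%N) h).
  by rewrite insubF // /P /vcg_price big_geq ?subrr // leqNgt h.
rewrite -/P hU.
case: (ltnP (r i) k) => hr.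
- rewrite /slot_of (insubT (fun m => (m < k)%N) hr) /=.
  apply: le_trans (@ef R n k beta v s i (r i) hb hv ho (ltnW hr)); rewrite -/P.
  apply: lerB => //.
  case: (ltnP (r i).+1 n) => hrn; last by rewrite hPz // nh_out // mulr0.
  have hcb := @cost_bound R n B s r i x (q (r i)) (r i) hc erefl hrn.
  have hP : P (r i) = alpha (r i) * q (r i) by rewrite /q mulrC divfK // hal.
  rewrite hP; apply: ler_wpM2l; first exact: Rn_ge0 ha _.
  apply: hcb => m hm; apply: le_trans (hBa _ _ hm); rewrite /B hr.
  by [].
- rewrite /slot_of insubF; last by rewrite ltnNge hr.
  rewrite subrr.
  have := @ef R n k beta v s i k hb hv ho (leqnn k).
  by rewrite (Rn_z hb (leqnn k)) mul0r /vcg_price big_geq // subrr.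
Qed.

Theorem proposition3 (R : realType) (n k : nat) (alpha beta : nat -> R) :
  Rn_gt n k alpha -> Rn_gt n k beta ->
  (gsp_vickrey_preserving n k alpha beta <->
   forall v : 'I_n -> R, (forall i, 0 <= v i) ->
     forall j : nat, (j.+1 < k)%N ->
       vcg_price k beta v j.+1 / alpha j.+1 <= vcg_price k beta v j / alpha j).
Proof.
move=> ha hb; split; [exact: necessity | exact: sufficiency].
Qed.
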